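(* Let $t \geq 2$ and $n \geq 1$ be integers, let $x = \left[\frac{nt-1}{t-1}\right]$ and $q = [x/t]$. Then $$R_{t-1,t}(K_{1,n}) = \begin{cases} x & \text{if } x = tq+1 \text{ with } x \text{ and } q \text{ both odd},\\ x+1 & \text{otherwise.}\end{cases}$$
   Context: $[a]$ denotes the integer part (floor) of a real number $a$. $K_{1,n}$ is the star with $n$ edges. For a graph $G$ and integers $1 \leq s < t$, $R_{s,t}(G)$ is the smallest positive integer $N$ such that every coloring of the edges of the complete graph $K_N$ with $t$ colors contains a (not necessarily induced) subgraph isomorphic to $G$ whose edges use at most $s$ distinct colors. *)

(* Defs.v *)
From mathcomp Require Import all_boot.
Set Implicit Arguments. Unset Strict Implicit. Unset Printing Implicit Defensive.

(* A simple graph on a finite vertex type: an edge relation (assumed symmetric,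
   irreflexive by the users; we only use it through its edge pairs). *)

(* A t-coloring of the edges of K_N: a symmetric map on pairs of vertices;
   values on the diagonal are irrelevant (never used, since embeddings are
   injective and graph edges join distinct vertices). *)
Definition edge_coloring (N t : nat) := 'I_N -> 'I_N -> 'I_t.
Definition sym_coloring N t (c : edge_coloring N t) := forall i j, c i j = c j i.

Definition used_colors (V : finType) (e : rel V) N t (c : edge_coloring N t)
  (f : V -> 'I_N) : {set 'I_t} :=
  [set c (f u) (f v) | u in V, v in V & e u v].

Definition has_few_colored_copy (V : finType) (e : rel V) N t s
  (c : edge_coloring N t) : Prop :=
  exists f : V -> 'I_N, injective f /\ #|used_colors e c f| <= s.

Definition ramsey_prop (V : finType) (e : rel V) (s t N : nat) : Prop :=
  forall c : edge_coloring N t, sym_coloring c -> has_few_colored_copy e s c.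

Definition is_Rst (V : finType) (e : rel V) (s t R : nat) : Prop :=
  0 < R /\ ramsey_prop e s t R /\
  forall N, 0 < N -> ramsey_prop e s t N -> R <= N.

Definition star_rel (n : nat) : rel 'I_n.+1 :=
  fun u v => ((val u == 0) && (val v != 0)) || ((val v == 0) && (val u != 0)).
Arguments star_rel n : clear implicits.

(* Main.v *)
Require Import Defs.
From mathcomp Require Import all_boot zify.
From Stdlib Require Import Classical.
Set Implicit Arguments. Unset Strict Implicit. Unset Printing Implicit Defensive.

Definition Aset N t (c : edge_coloring N t) (v : 'I_N) (k : 'I_t) :=
  [set w | (w != v) && (c v w == k)].

Lemma not_ramsey n t N (c : edge_coloring N t) : 0 < t -> sym_coloring c ->
  (forall v k, N - n <= #|Aset c v k|) -> ~ ramsey_prop (star_rel n) (t-1) t N.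
Proof.
move=> Ht Hs Hd /(_ c Hs) [f [finj Hcard]].
have Hall : used_colors (star_rel n) c f = setT.
  apply/setP=> k; rewrite inE.
  set v := f ord0.
  set L := [set f (lift ord0 i) | i : 'I_n].
  have cL : #|L| = n.
    rewrite card_imset ?card_ord //.
    by move=> i j /finj /lift_inj.
  have HU : #|Aset c v k :|: L| <= N - 1.
    apply: (@leq_trans #|~: [set v]|); last by rewrite cardsC1 card_ord subn1.
    apply: subset_leq_card.
    apply/subsetP=> w; rewrite !inE => /orP [|/imsetP [i _ ->]].
      by case/andP.
    by apply/eqP => /finj.
  have := cardsUI (Aset c v k) L.
  have := Hd v k.
  case: (set_0Vmem (Aset c v k :&: L)) => [->|[w]]; first by rewrite cards0 => H1 H2; move: H2 HU (ltn_ord v); rewrite cL; lia.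
  rewrite !inE => /andP [/andP [_ /eqP Hc] /imsetP [i _ Hw]] _ _.
  rewrite /used_colors; apply/imset2P; exists ord0 (lift ord0 i) => //.
    by rewrite !inE /star_rel /=.
  by rewrite -Hw.
move: Hcard; rewrite Hall cardsT card_ord; lia.
Qed.

Lemma ramsey_of n t N : 0 < t ->
  (forall c : edge_coloring N t, sym_coloring c -> exists v k, #|Aset c v k| + n <= N - 1) ->
  ramsey_prop (star_rel n) (t-1) t N.
Proof.
move=> Ht H c Hs; have [v [k Hvk]] := H c Hs.
set B := [set w | (w != v) && (c v w != k)].
have cB : n <= #|B|.
  have : N - 1 <= #|B :|: Aset c v k|.
    apply: (@leq_trans #|~: [set v]|); first by rewrite cardsC1 card_ord subn1.
    apply: subset_leq_card.
    by apply/subsetP=> w; rewrite !inE => ->; case: (c v w == k).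
  have := cardsUI B (Aset c v k).
  have -> : B :&: Aset c v k = set0.
    by apply/setP=> w; rewrite !inE; case: (c v w == k); rewrite ?andbF.
  rewrite cards0; lia.
pose f (i : 'I_n.+1) := if val i == 0 then v else nth v (enum B) (val i).-1.
have Hlt : forall i : 'I_n.+1, val i != 0 -> (val i).-1 < #|B|.
  move=> i Hi; case: i Hi => /= j Hj Hi; apply: leq_trans cB; lia.
have Hin : forall i : 'I_n.+1, val i != 0 -> f i \in B.
  move=> i Hi; rewrite /f (negbTE Hi) -mem_enum; apply: mem_nth.
  by rewrite -cardE Hlt.
have HB : forall w, w \in B -> (w != v) && (c v w != k) by move=> w; rewrite inE.
exists f; split.
  move=> i j.
  case: (eqVneq (val i) 0) => Hi; case: (eqVneq (val j) 0) => Hj.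
  - by move=> _; apply/val_inj; rewrite Hi Hj.
  - rewrite {1}/f Hi eqxx => Hv; have := HB _ (Hin _ Hj); by rewrite -Hv eqxx.
  - rewrite {2}/f Hj eqxx => Hv; have := HB _ (Hin _ Hi); by rewrite Hv eqxx.
  - rewrite /f (negbTE Hi) (negbTE Hj) => /eqP.
    rewrite nth_uniq ?enum_uniq -?cardE ?Hlt //.
    move=> /eqP Hij; apply/val_inj; move: Hi Hj Hij; case: (val i) (val j) => [|a] [|b] //= _ _ -> //.
apply: (@leq_trans #|~: [set k]|); last by rewrite cardsC1 card_ord subn1.
apply: subset_leq_card; apply/subsetP => y /imset2P [a b _]; rewrite !inE /star_rel /=.
move=> /orP [/andP [/eqP Ha Hb]|/andP [/eqP Hb Ha]] ->.
+ have -> : f a = v by rewrite /f; case: a Ha => /= ? _ ->.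
  by have /andP [] := HB _ (Hin _ Hb).
+ have -> : f b = v by rewrite /f; case: b Hb => /= ? _ ->.
  by rewrite Hs; have /andP [] := HB _ (Hin _ Ha).
Qed.

Lemma ramsey_mono n s t N M : N <= M -> ramsey_prop (star_rel n) s t N -> ramsey_prop (star_rel n) s t M.
Proof.
elim: M => [|M IH]; first by rewrite leqn0 => /eqP ->.
rewrite leq_eqVlt => /orP [/eqP -> //| /IH H /H {IH H} HN].
move=> c Hs.
pose c' : edge_coloring M t := fun i j => c (widen_ord (leqnSn M) i) (widen_ord (leqnSn M) j).
have [|f [finj Hf]] := HN c'; first by move=> i j; rewrite /c' Hs.
exists (fun i => widen_ord (leqnSn M) (f i)); split => //.
by move=> i j /(congr1 val) /= /val_inj /finj.
Qed.

Lemma count_lb N m (v : 'I_N) (P : pred 'I_N) (g : nat -> nat) :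
 (forall i, i < m -> g i < N) -> (forall i j, i < m -> j < m -> g i = g j -> i = j) ->
 (forall i, i < m -> P (insubd v (g i))) -> m <= #|[set w | P w]|.
Proof.
move=> Hb Hinj HP.
pose G (i : 'I_m) := insubd v (g i).
have HG : forall i : 'I_m, val (G i) = g i by move=> i; rewrite val_insubd Hb.
have <- : #|G @: 'I_m| = m.
  rewrite card_imset ?card_ord // => i j /(congr1 val); rewrite !HG => /Hinj.
  by move=> H; apply/val_inj/H.
apply: subset_leq_card; apply/subsetP => w /imsetP [i _ ->]; rewrite inE.
exact: HP.
Qed.

Lemma modA N v d : v < N -> d < N -> ((v + d) %% N + N - v) %% N = d.
Proof.
move=> vN dN; have N0 : 0 < N by lia.
have wN := ltn_pmod (v + d) N0.
rewrite -[RHS](modn_small dN); apply/eqP; rewrite -(eqn_modDr v).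
have -> : (v + d) %% N + N - v + v = (v + d) %% N + N by lia.
by rewrite modnDr modn_mod addnC.
Qed.

Lemma modB N v d : v < N -> 0 < d < N -> (v + N - (v + d) %% N) %% N = N - d.
Proof.
move=> vN dN; have N0 : 0 < N by lia.
have wN := ltn_pmod (v + d) N0.
have H : N - d < N by lia.
rewrite -[RHS](modn_small H); apply/eqP; rewrite -(eqn_modDr ((v + d) %% N)).
have -> : v + N - (v + d) %% N + (v + d) %% N = v + N by lia.
rewrite modnDmr.
have -> : N - d + (v + d) = v + N by lia.
by [].
Qed.

Definition MA N := if odd N then N - 2 else N - 1.
Definition facA N (i j : nat) := let M := MA N in
  if (i < M) && (j < M) then ((i + j) * (M.+1 %/ 2)) %% M else minn i j.
Definition colA N t (Ht : 0 < t) : edge_coloring N t :=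
  fun i j => Ordinal (ltn_pmod (facA N i j) Ht).

Lemma colA_sym N t Ht : sym_coloring (@colA N t Ht).
Proof. by move=> i j; apply/val_inj; rewrite /= /facA addnC minnC andbC. Qed.

Lemma facA_key M v k h : 0 < M -> v < M -> k < M -> h * 2 = M.+1 ->
  ((v + (2 * k + M - v) %% M) * h) %% M = k.
Proof.
move=> M0 vM kM Hh.
rewrite -modnMml modnDmr.
have -> : v + (2 * k + M - v) = k * 2 + M by lia.
rewrite modnDr modnMml -mulnA (mulnC 2) Hh mulnSr modnMDl.
exact: modn_small.
Qed.

Lemma degA N t m (Ht : 0 < t) : t * m <= N - 1 -> (odd N -> t * m < N - 1) ->
  forall v k, m <= #|Aset (@colA N t Ht) v k|.
Proof.
move=> H1 H2 v k.
case: (posnP m) => [->//|m0].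
set M := MA N.
have vN := ltn_ord v; have kt := ltn_ord k.
have HM : [/\ odd M, t * m <= M & M < N].
  rewrite /M /MA; case: ifP => oN.
    have := H2 oN => H3; rewrite oddB ?oN //; last by lia.
    split => //; lia.
  rewrite oddB ?oN //; last by lia.
  split => //; lia.
case: HM => oM tmM MN.
have M0 := odd_gt0 oM.
have Hh : (M.+1 %/ 2) * 2 = M.+1.
  by apply: divnK; rewrite dvdn2 /= oM.
have kM : forall i, i < m -> i * t + k < M.
  move=> i im; apply: leq_trans tmM.
  apply: (@leq_trans (i.+1 * t)); first by rewrite mulSn; lia.
  by rewrite mulnC leq_mul2l im orbT.
have facvv : v < M -> facA N v v = v.
  move=> vM; rewrite /facA -/M vM /=.
  have -> : (v + v) * (M.+1 %/ 2) = v * M + v by rewrite -mulnSr -Hh; nia.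
  by rewrite modnMDl modn_small.
pose g i := let k' := i * t + k in
  if v < M then (if k' == v then M else (2 * k' + M - v) %% M) else k'.
have Hfac : forall i, i < m -> facA N v (g i) = i * t + k.
  move=> i im; have Hk := kM i im; rewrite /g /facA -/M.
  case vM: (v < M); last by rewrite /=; apply/minn_idPr; lia.
  case: eqP => [Hv|Hne]; first by rewrite -Hv ltnn andbF /=; apply/minn_idPl; lia.
  by rewrite ltn_pmod //= facA_key // mulnC.
have Hg : forall i, i < m -> g i < N.
  move=> i im; have := kM i im; rewrite /g; case: ifP => //; last by lia.
  by case: eqP => // _ _ _; apply: leq_trans (ltn_pmod _ M0) _; lia.
rewrite /Aset; apply: (@count_lb N m v (fun w => (w != v) && (@colA N t Ht v w == k)) g) => //.
  by move=> i j im jm /(congr1 (facA N v)); rewrite !Hfac //; move/eqP; rewrite eqn_add2r eqn_mul2r gtn_eqF //= => /eqP.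
move=> i im; have Hv : nat_of_ord (insubd v (g i)) = g i by move: (val_insubd v (g i)); rewrite Hg.
apply/andP; split.
  apply/negP => /eqP Heq; move: Hv; rewrite Heq.
  move: (Hfac i im) (kM i im); rewrite /g; case: ifP => vM.
    case: eqP => [Hk|Hne] E1 E2 Hv; first by lia.
    by move: E1; rewrite -Hv facvv //; lia.
  move=> _ E2 Hv; lia.
apply/eqP/val_inj => /=; rewrite Hv Hfac // modnMDl modn_small //.
Qed.

Definition facB N (i j : nat) := minn ((j + N - i) %% N) ((i + N - j) %% N).
Definition colB N t (Ht : 0 < t) : edge_coloring N t :=
  fun i j => Ordinal (ltn_pmod (facB N i j).-1 Ht).

Lemma colB_sym N t Ht : sym_coloring (@colB N t Ht).
Proof. by move=> i j; apply/val_inj; rewrite /= /facB minnC. Qed.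

Lemma degB N t m (Ht : 0 < t) : t * m <= N - 1 -> ~~ odd m ->
  forall v k, m <= #|Aset (@colB N t Ht) v k|.
Proof.
move=> H1 H2 v k.
case: (posnP m) => [->//|m0].
have vN := ltn_ord v; have kt := ltn_ord k.
have N0 : 0 < N by lia.
have Hm2 : (m %/ 2) * 2 = m by apply: divnK; rewrite dvdn2.
pose d i := (i %/ 2) * t + k + 1.
have Hd : forall i, i < m -> 0 < d i /\ 2 * d i <= N - 1.
  move=> i im; split; first by rewrite /d; lia.
  have : (i %/ 2).+1 * t <= (m %/ 2) * t by rewrite leq_mul2r; apply/orP; right; lia.
  rewrite mulSn /d => Hle.
  have : t * m = 2 * ((m %/ 2) * t) by rewrite -{1}Hm2; nia.
  lia.
pose g i := if i %% 2 == 1 then (v + d i) %% N else (v + (N - d i)) %% N.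
have Hg : forall i, g i < N by move=> i; rewrite /g; case: ifP => _; apply: ltn_pmod.
have HD : forall i, i < m -> (g i + N - v) %% N = if i %% 2 == 1 then d i else N - d i.
  move=> i im; have [? ?] := Hd i im; rewrite /g; case: ifP => _; apply: modA; lia.
have HF : forall i, i < m -> facB N v (g i) = d i.
  move=> i im; have [? ?] := Hd i im; rewrite /facB /g; case: ifP => _.
    rewrite modA ?modB //; try lia; apply/minn_idPl; lia.
  rewrite modA ?modB //; try lia.
rewrite /Aset; apply: (@count_lb N m v (fun w => (w != v) && (@colB N t Ht v w == k)) g) => //.
  move=> i j im jm Hij; have := HD i im; rewrite Hij HD //.
  have [? ?] := Hd i im; have [? ?] := Hd j jm.
  have Hdd : d i = d j -> i %/ 2 = j %/ 2.
    rewrite /d => /eqP; rewrite !addn1 eqSS eqn_add2r eqn_mul2r gtn_eqF //= => /eqP //.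
  case: ifP => /eqP Hi; case: ifP => /eqP Hj Hdij.
  - have E : d i = d j by lia.
    have := Hdd E; lia.
  - lia.
  - lia.
  - have E : d i = d j by lia.
    have := Hdd E; lia.
move=> i im; have Hv : nat_of_ord (insubd v (g i)) = g i by move: (val_insubd v (g i)); rewrite Hg.
have [? ?] := Hd i im.
apply/andP; split.
  apply/negP => /eqP Heq; move: Hv; rewrite Heq => Hv.
  have := HD i im; rewrite -Hv.
  have -> : v + N - v = N by lia.
  rewrite modnn; case: ifP => _; lia.
apply/eqP/val_inj => /=; rewrite Hv HF // /d addn1 /= modnMDl modn_small //.
Qed.

Lemma cardA N t (c : edge_coloring N t) v k :
  #|Aset c v k| = \sum_(w < N | (w != v) && (c v w == k)) 1.
Proof. by rewrite -sum1_card; apply: eq_bigl => w; rewrite inE. Qed.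

Lemma sumA N t (c : edge_coloring N t) v : \sum_(k < t) #|Aset c v k| = N - 1.
Proof.
rewrite (eq_bigr _ (fun k _ => cardA c v k)).
rewrite -(partition_big (fun w => c v w) predT) //.
have -> : \sum_(w < N | w != v) 1 = #|~: [set v]|.
  by rewrite -sum1_card; apply: eq_bigl => w; rewrite !inE.
by rewrite cardsC1 card_ord subn1.
Qed.

Lemma sum_even N t (c : edge_coloring N t) k : sym_coloring c ->
  ~~ odd (\sum_(v < N) #|Aset c v k|).
Proof.
move=> Hs.
have E : forall v, #|Aset c v k| =
   \sum_(w < N) ((((w : nat) < v) && (c v w == k)) : nat) +
   \sum_(w < N) ((((v : nat) < w) && (c v w == k)) : nat).
  move=> v; rewrite cardA big_mkcond -big_split /=; apply: eq_bigr => w _.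
  have -> : (w != v) = ((w : nat) != v) by [].
  by case: ltngtP; case: (c v w == k).
rewrite (eq_bigr _ (fun v _ => E v)) big_split /=.
rewrite exchange_big /=.
have -> : \sum_(j < N) \sum_(i < N) (((j : nat) < i) && (c i j == k) : nat) =
          \sum_(j < N) \sum_(i < N) (((j : nat) < i) && (c j i == k) : nat).
  by apply: eq_bigr => j _; apply: eq_bigr => i _; rewrite Hs.
by rewrite addnn odd_double.
Qed.

Unset Implicit Arguments.

Theorem theorem3 (t n : nat) : 2 <= t -> 1 <= n ->
  let x := (n * t - 1) %/ (t - 1) in
  let q := x %/ t in
  is_Rst (star_rel n) (t - 1) t
    (if (x == t * q + 1) && odd x && odd q then x else x + 1).
Proof.
move=> Ht2 Hn x q.
have Ht : 0 < t by lia.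
have Ht1 : 0 < t - 1 by lia.
have Hx1 : x * (t - 1) <= n * t - 1 by apply: leq_trunc_div.
have Hx2 : n * t - 1 < x.+1 * (t - 1) by apply: ltn_ceil.
have Hnx : n <= x by rewrite /x leq_divRL //; nia.
have Hqdef : q = x %/ t by [].
clearbody q; clearbody x.
have [y Hy] : exists y, y = x - n by exists (x - n).
have Ey1 : t * y <= x - 1 by nia.
have Ey2 : x + 1 <= t * (y + 1) by nia.
clear Hx1 Hx2.
set cond := (x == t * q + 1) && odd x && odd q.
have Hcond : cond -> [/\ x = t * q + 1, odd x, odd q & q = y].
  rewrite /cond => /andP [/andP [/eqP Hxq Hox] Hoq]; split => //.
  have : y <= q by rewrite -(leq_pmul2l Ht); lia.
  have : q <= y.
    rewrite leqNgt; apply/negP => Hlt.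
    have : t * (y + 1) <= t * q by rewrite leq_pmul2l //; lia.
    lia.
  lia.
split; first by case: ifP => _; lia.
split.
  case C: cond.
    have [Hxq Hox Hoq Hqy] := Hcond C.
    apply: ramsey_of => // c Hs.
    apply: NNPP => Hno.
    have Hall : forall v k, q <= #|Aset c v k|.
      move=> v k; rewrite leqNgt; apply/negP => Hlt; apply: Hno; exists v, k; lia.
    have Hx0 : 0 < x by lia.
    have Hq : forall v, #|Aset c v (Ordinal Ht)| = q.
      move=> v; apply/eqP; rewrite eqn_leq Hall andbT.
      have := sumA c v; rewrite (bigD1 (Ordinal Ht)) //=.
      set S := (X in _ + X = _) => H2.
      have H1 : t.-1 * q <= S.
        rewrite /S; apply: (@leq_trans (\sum_(k < t | k != Ordinal Ht) q)).
          by rewrite sum_nat_const cardC1 card_ord.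
        by apply: leq_sum.
      have E : t.-1 * q + q = t * q by rewrite addnC -mulSn prednK.
      lia.
    have := sum_even (Ordinal Ht) Hs.
    rewrite (eq_bigr (fun _ => q)) ?sum_nat_const ?card_ord; last by move=> v _; apply: Hq.
    by rewrite oddM Hox Hoq.
  apply: ramsey_of => // c Hs.
  have v0 : 'I_(x + 1) by exists 0; lia.
  exists v0.
  apply: NNPP => Hno.
  have Hall : forall k, y + 1 <= #|Aset c v0 k|.
    move=> k; rewrite leqNgt; apply/negP => Hlt; apply: Hno; exists k; lia.
  have := sumA c v0.
  have : \sum_(k < t) (y + 1) <= \sum_(k < t) #|Aset c v0 k| by apply: leq_sum => k _.
  rewrite sum_nat_const card_ord.
  move=> H1 H2; lia.
move=> N N0 HN; rewrite leqNgt; apply/negP => HNR.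
case C: cond in HNR.
  have [Hxq Hox Hoq Hqy] := Hcond C.
  have HR : ramsey_prop (star_rel n) (t - 1) t (x - 1) by apply: (ramsey_mono _ HN); lia.
  apply: (not_ramsey (c := @colB (x - 1) t Ht) Ht (@colB_sym _ _ Ht) _ HR).
  have Eq : x - 1 - n = q.-1 by lia.
  apply: degB; rewrite Eq.
    have E2 : t * q.-1 + t = t * q by rewrite -mulnSr prednK //; lia.
    lia.
  by move: Hoq; case: (q) => //= q' ->.
have HR : ramsey_prop (star_rel n) (t - 1) t x by apply: (ramsey_mono _ HN); lia.
have Eq : x - n = y by lia.
case Om: (odd (x - n)).
  apply: (not_ramsey (c := @colA x t Ht) Ht (@colA_sym _ _ Ht) _ HR).
  apply: degA; rewrite Eq //.
  move=> Ox; rewrite ltn_neqAle Ey1 andbT.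
  apply/negP => /eqP Heq.
  have Hx : x = y * t + 1 by lia.
  have Hqq : q = y.
    rewrite Hqdef {1}Hx divnMDl // divn_small ?addn0 //; lia.
  have Oy : odd y by rewrite -Eq.
  move: C; rewrite /cond Ox Hqq Oy !andbT => /negbT /eqP H; apply: H; lia.
apply: (not_ramsey (c := @colB x t Ht) Ht (@colB_sym _ _ Ht) _ HR).
apply: degB; rewrite Eq //.
by rewrite -Eq Om.
Qed.
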